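(* Consider Algorithm SAVIC (described in the context) run with heterogeneous data. Suppose each $f_m$ is $\mu$-strongly convex ($\mu\ge0$) and $L$-smooth, and there are constants $0<\alpha\le\Gamma$ with $\alpha I\preceq D^0\preceq\Gamma I$ and $\alpha I\preceq H^t\preceq\Gamma I$ for all $t$. Then for any $t$ with $t_p\le t<t_{p+1}$, $$-\frac2M\sum_{m=1}^M\langle\hat x_t-x_*,\nabla f_m(x_t^m)\rangle\le-2D_f(\hat x_t,x_* )-\frac{\mu}{\Gamma}\|\hat x_t-x_*\|^2_{\hat D^{t_p}}+\frac{L}{\alpha}V_t.$$
   Context: Problem: minimize $f(x)=\frac1M\sum_mf_m(x)$ over $\mathbb R^d$, $f_m(x)=\mathbb E_{z\sim\mathcal D_m}[f_m(x,z)]$, $x_*$ the solution; $\mu$-strong convexity and $L$-smoothness: $\frac{\mu}{2}\|x-y\|^2\le f_m(x)-f_m(y)-\langle\nabla f_m(y),x-y\rangle\le\frac{L}{2}\|x-y\|^2$. $D_f(x,y)=f(x)-f(y)-\langle\nabla f(y),x-y\rangle$. $\|x\|_A^2=\langle x,Ax\rangle$. Preconditioner: diagonal $D^t$ from diagonal $D^0,H^t$ via $(D^t)^2=\beta_t(D^{t-1})^2+(1-\beta_t)(H^t)^2$ or $D^t=\beta_tD^{t-1}+(1-\beta_t)H^t$, $\beta_t\in[0,1]$; $(\hat D^t)_{ii}=\max\{\alpha,|D^t_{ii}|\}$. Algorithm SAVIC: stepsize $\gamma>0$, $x_0^m=x_0$, synchronization times $t_0=0<t_1<\dots$; at $t=t_p$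 the matrix $\hat D^{t_p}$ is updated and used by all clients for $t_p\le t<t_{p+1}$; client $m$ samples $z_m\sim\mathcal D_m$ i.i.d. and sets $x_{t+1}^m=\frac1M\sum_j(x_t^j-\gamma(\hat D^{t_p})^{-1}\nabla f_j(x_t^j,z_j))$ if $t=t_p$ for some $p$, else $x_{t+1}^m=x_t^m-\gamma(\hat D^{t_p})^{-1}\nabla f_m(x_t^m,z_m)$. Notation: $\hat x_t=\frac1M\sum_mx_t^m$; $V_t=\frac1M\sum_m\|x_t^m-\hat x_t\|^2_{\hat D^{t_p}}$ for $t_p\le t<t_{p+1}$. *)

(* Defs.v *)
From HB Require Import structures.
From mathcomp Require Import all_boot all_order all_algebra.
From mathcomp Require Import reals.
Set Implicit Arguments. Unset Strict Implicit. Unset Printing Implicit Defensive.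
Import Order.TTheory GRing.Theory Num.Theory.
Local Open Scope ring_scope.

Section SAVIC.
Variables (R : realType) (d : nat).

Definition dot (x y : 'rV[R]_d) : R := (x *m y^T) 0 0.
Definition sqnorm (x : 'rV[R]_d) : R := dot x x.
Definition wnorm2 (A : 'M[R]_d) (x : 'rV[R]_d) : R := (x *m A *m x^T) 0 0.

Definition loewner_le (A B : 'M[R]_d) : Prop :=
  forall v : 'rV[R]_d, wnorm2 A v <= wnorm2 B v.

Definition upd_sq (beta : R) (Dprev H : 'M[R]_d) : 'M[R]_d :=
  \matrix_(i, j) (if i == j then
     Num.sqrt (beta * Dprev i i ^+ 2 + (1 - beta) * H i i ^+ 2) else 0).
Definition upd_lin (beta : R) (Dprev H : 'M[R]_d) : 'M[R]_d :=
  beta *: Dprev + (1 - beta) *: H.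

Definition Dhat (alpha : R) (D : 'M[R]_d) : 'M[R]_d :=
  \matrix_(i, j) (if i == j then Num.max alpha `|D i i| else 0).

End SAVIC.

(* Main.v *)
Require Import Defs.
From HB Require Import structures.
From mathcomp Require Import all_boot all_order all_algebra.
From mathcomp Require Import reals.
From mathcomp Require Import ring lra.
Import Order.TTheory GRing.Theory Num.Theory.
Set Implicit Arguments. Unset Strict Implicit.
Local Open Scope ring_scope.

Section H.
Variables (R : realType) (d : nat).
Implicit Types x y z v : 'rV[R]_d.

Lemma dotE x y : dot x y = \sum_i x 0 i * y 0 i.
Proof. by rewrite /dot mxE; apply: eq_bigr => i _; rewrite mxE. Qed.

Lemma dotC x y : dot x y = dot y x.
Proof. by rewrite !dotE; apply: eq_bigr => i _; rewrite mulrC. Qed.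

Lemma dotDr x y z : dot x (y + z) = dot x y + dot x z.
Proof. by rewrite !dotE -big_split; apply: eq_bigr => i _; rewrite mxE mulrDr. Qed.

Lemma dotNr x y : dot x (- y) = - dot x y.
Proof. by rewrite !dotE -sumrN; apply: eq_bigr => i _; rewrite mxE mulrN. Qed.

Lemma dotBr x y z : dot x (y - z) = dot x y - dot x z.
Proof. by rewrite dotDr dotNr. Qed.

Lemma dotZr x a y : dot x (a *: y) = a * dot x y.
Proof. by rewrite !dotE mulr_sumr; apply: eq_bigr => i _; rewrite mxE mulrCA. Qed.

Lemma dot_sumr (M : nat) x (y : 'I_M -> 'rV[R]_d) :
  dot x (\sum_(m < M) y m) = \sum_(m < M) dot x (y m).
Proof.
rewrite dotE.
under eq_bigr => i _ do rewrite summxE mulr_sumr.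
rewrite exchange_big; apply: eq_bigr => m _; by rewrite dotE.
Qed.

Lemma dot0r x : dot x 0 = 0.
Proof. by rewrite dotE big1 // => i _; rewrite mxE mulr0. Qed.

Lemma dotDl x y z : dot (y + z) x = dot y x + dot z x.
Proof. by rewrite dotC dotDr !(dotC x). Qed.
Lemma dotNl x y : dot (- y) x = - dot y x.
Proof. by rewrite dotC dotNr dotC. Qed.
Lemma dotBl x y z : dot (y - z) x = dot y x - dot z x.
Proof. by rewrite dotDl dotNl. Qed.
Lemma dotZl x a y : dot (a *: y) x = a * dot y x.
Proof. by rewrite dotC dotZr dotC. Qed.
Lemma dot_suml (M : nat) x (y : 'I_M -> 'rV[R]_d) :
  dot (\sum_(m < M) y m) x = \sum_(m < M) dot (y m) x.
Proof. by rewrite dotC dot_sumr; apply: eq_bigr => m _; rewrite dotC. Qed.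
Lemma dot0l x : dot 0 x = 0.
Proof. by rewrite dotC dot0r. Qed.

Lemma sqnorm_ge0 v : 0 <= sqnorm v.
Proof. by rewrite /sqnorm dotE; apply: sumr_ge0 => i _; rewrite -expr2 sqr_ge0. Qed.

Lemma sqnorm_eq0 v : sqnorm v = 0 -> v = 0.
Proof.
rewrite /sqnorm dotE => H.
have H2 := @psumr_eq0P _ _ xpredT (fun i => v 0 i ^+ 2) (fun i _ => sqr_ge0 (v 0 i)).
apply/matrixP => a b; rewrite (ord1 a) mxE.
apply/eqP; rewrite -sqrf_eq0; apply/eqP; apply: H2 => //.
Qed.

Lemma sqnormN v : sqnorm (- v) = sqnorm v.
Proof. by rewrite /sqnorm dotNl dotNr opprK. Qed.

Lemma sqnormD v w : sqnorm (v + w) = sqnorm v + 2 * dot v w + sqnorm w.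
Proof. rewrite /sqnorm dotDl !dotDr (dotC w v). ring. Qed.

Lemma wnorm2_diag (A : 'M[R]_d) v : (forall i j, i != j -> A i j = 0) ->
  wnorm2 A v = \sum_i A i i * v 0 i ^+ 2.
Proof.
move=> HA; rewrite /wnorm2 mxE; apply: eq_bigr => k _.
rewrite !mxE (bigD1 k) //= big1 ?addr0.
  by rewrite expr2 mulrA mulrAC mulrC mulrA.
by move=> j jk; rewrite HA ?mulr0.
Qed.

Lemma wnorm2_delta (A : 'M[R]_d) i : wnorm2 A (delta_mx 0 i) = A i i.
Proof. by rewrite /wnorm2 -rowE trmx_delta -colE !mxE. Qed.

Lemma wnorm2_scalar (a : R) (i : 'I_d) : wnorm2 (a%:M : 'M[R]_d) (delta_mx 0 i) = a.
Proof. by rewrite wnorm2_delta mxE eqxx mulr1n. Qed.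

End H.
Unset Implicit Arguments. Set Strict Implicit.

Theorem lemma6
  (R : realType) (d M : nat) (HM : (0 < M)%N)
  (f : 'I_M -> 'rV[R]_d -> R) (gradf : 'I_M -> 'rV[R]_d -> 'rV[R]_d)
  (Z : Type) (sgrad : 'I_M -> 'rV[R]_d -> Z -> 'rV[R]_d)
  (mu L alpha Gamma : R)
  (Hmu : 0 <= mu)
  (Hsc : forall m x y, mu / 2 * sqnorm (x - y)
                       <= f m x - f m y - dot (gradf m y) (x - y))
  (Hsm : forall m x y, f m x - f m y - dot (gradf m y) (x - y)
                       <= L / 2 * sqnorm (x - y))
  (xstar : 'rV[R]_d)
  (Hxstar : forall x, \sum_(m < M) f m xstar / M%:R <= \sum_(m < M) f m x / M%:R)
  (Halpha : 0 < alpha) (HaG : alpha <= Gamma)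
  (sqrule : bool) (beta : nat -> R) (Hbeta : forall t, 0 <= beta t <= 1)
  (Dm Hm : nat -> 'M[R]_d)
  (HD0diag : is_diag_mx (Dm 0%N))
  (HD0 : loewner_le (alpha%:M) (Dm 0%N) /\ loewner_le (Dm 0%N) (Gamma%:M))
  (HHdiag : forall t, is_diag_mx (Hm t))
  (HH : forall t, loewner_le (alpha%:M) (Hm t) /\ loewner_le (Hm t) (Gamma%:M))
  (HDrec : forall t, Dm t.+1 = if sqrule then upd_sq (beta t.+1) (Dm t) (Hm t.+1)
                                else upd_lin (beta t.+1) (Dm t) (Hm t.+1))
  (gamma : R) (Hgamma : 0 < gamma)
  (tp : nat -> nat) (Htp0 : tp 0%N = 0%N) (Htpinc : forall p, (tp p < tp p.+1)%N)
  (z : nat -> 'I_M -> Z)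
  (x0 : 'rV[R]_d) (x : nat -> 'I_M -> 'rV[R]_d)
  (Hx0 : forall m, x 0%N m = x0)
  (Hxrec : forall p t m, (tp p <= t < tp p.+1)%N ->
     x t.+1 m =
       if t == tp p then
         M%:R^-1 *: \sum_(j < M) (x t j - gamma *: (sgrad j (x t j) (z t j) *m invmx (Dhat alpha (Dm (tp p)))))
       else x t m - gamma *: (sgrad m (x t m) (z t m) *m invmx (Dhat alpha (Dm (tp p)))))
  (p t : nat) (Ht : (tp p <= t < tp p.+1)%N) :
  let F := fun y => \sum_(m < M) f m y / M%:R in
  let gradF := fun y => M%:R^-1 *: \sum_(m < M) gradf m y in
  let Df := fun y w => F y - F w - dot (gradF w) (y - w) in
  let xhat := M%:R^-1 *: \sum_(m < M) x t m in
  let Dh := Dhat alpha (Dm (tp p)) in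
  let V := \sum_(m < M) wnorm2 Dh (x t m - xhat) / M%:R in
  - (2 / M%:R) * \sum_(m < M) dot (xhat - xstar) (gradf m (x t m))
  <= - 2 * Df xhat xstar - mu / Gamma * wnorm2 Dh (xhat - xstar) + L / alpha * V.
Proof.
cbv zeta.
set xh := M%:R^-1 *: \sum_(m < M) x t m.
set Dh := Dhat alpha (Dm (tp p)).
have Ga : 0 < Gamma by apply: lt_le_trans HaG.
have ent : forall (A : 'M[R]_d), loewner_le (alpha%:M) A /\ loewner_le A (Gamma%:M) ->
   forall i, alpha <= A i i <= Gamma.
  move=> A [H1 H2] i; have := H1 (delta_mx 0 i); have := H2 (delta_mx 0 i).
  by rewrite !wnorm2_delta !mxE eqxx !mulr1n => -> ->.
have Dbound : forall t i, alpha <= Dm t i i <= Gamma.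
  elim=> [|s IH] i; first exact: ent.
  have /andP[b0 b1] := Hbeta s.+1.
  have /andP[h0 h1] := ent _ (HH s.+1) i.
  have /andP[d0 d1] := IH i.
  rewrite HDrec; case: (sqrule).
    rewrite /upd_sq mxE eqxx.
    set S := (_ + _).
    have S0 : 0 <= S by rewrite /S; nra.
    rewrite -(ger0_norm (ltW Halpha)) -(ger0_norm (ltW Ga)) -!sqrtr_sqr !ler_sqrt //; last by nra.
    have e1 : alpha ^+ 2 <= Dm s i i ^+ 2 by nra.
    have e2 : Dm s i i ^+ 2 <= Gamma ^+ 2 by nra.
    have e3 : alpha ^+ 2 <= Hm s.+1 i i ^+ 2 by nra.
    have e4 : Hm s.+1 i i ^+ 2 <= Gamma ^+ 2 by nra.
    apply/andP; split; rewrite /S; nra.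
  rewrite /upd_lin !mxE; apply/andP; split; nra.
have Dh_off : forall i j, i != j -> Dh i j = 0.
  by move=> i j /negbTE ij; rewrite /Dh /Dhat mxE ij.
have Dh_ii : forall i, alpha <= Dh i i <= Gamma.
  move=> i; rewrite /Dh /Dhat mxE eqxx.
  have /andP[d0 d1] := Dbound (tp p) i.
  rewrite ger0_norm; last by lra.
  by rewrite max_r // d0 d1.
have Wlo : forall v, alpha * sqnorm v <= wnorm2 Dh v.
  move=> v; rewrite wnorm2_diag // /sqnorm dotE mulr_sumr; apply: ler_sum => i _.
  rewrite -expr2; apply: ler_wpM2r; first exact: sqr_ge0.
  by case/andP: (Dh_ii i).
have Whi : forall v, wnorm2 Dh v <= Gamma * sqnorm v.
  move=> v; rewrite wnorm2_diag // /sqnorm dotE mulr_sumr; apply: ler_sum => i _.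
  rewrite -expr2; apply: ler_wpM2r; first exact: sqr_ge0.
  by case/andP: (Dh_ii i).
pose m0 := Ordinal HM.
have Lterm : forall v, L * sqnorm v <= L / alpha * wnorm2 Dh v.
  move=> v; case: (lerP 0 L) => L0.
    have w := Wlo v; have s0 := sqnorm_ge0 v.
    rewrite -mulrA ler_wpM2l //.
    by rewrite ler_pdivlMl.
  have sc := Hsc m0 v 0; have sm := Hsm m0 v 0.
  have v0 : sqnorm (v - 0) = 0.
    apply/eqP; rewrite eq_le sqnorm_ge0 andbT.
    have : (mu - L) / 2 * sqnorm (v - 0) <= 0 by lra.
    by rewrite pmulr_rle0 // divr_gt0 //; lra.
  move: v0; rewrite subr0 => v0.
  have w0 : wnorm2 Dh v = 0.
    apply/eqP; rewrite eq_le; have := Whi v; have := Wlo v; rewrite v0 !mulr0 => -> ->; done.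
  by rewrite v0 w0 !mulr0.
have muterm : forall v, mu / Gamma * wnorm2 Dh v <= mu * sqnorm v.
  move=> v; rewrite -mulrA ler_wpM2l // ler_pdivrMl //; exact: Whi.
have N0 : 0 < M%:R :> R by rewrite ltr0n.
have Nne0 : M%:R != 0 :> R by rewrite gt_eqF.
have Ni0 : 0 <= M%:R^-1 :> R by rewrite invr_ge0 ltW.
set g := M%:R^-1 *: \sum_(m < M) gradf m xstar.
have key : forall h, \sum_(m < M) f m (xstar + h) / M%:R - \sum_(m < M) f m xstar / M%:R
     - dot g h <= L / 2 * sqnorm h.
  move=> h; rewrite /g dotZl dot_suml mulr_sumr -!sumrB.
  apply: (@le_trans _ _ (\sum_(m < M) (L / 2 * sqnorm h / M%:R))).
    apply: ler_sum => m _; have := Hsm m (xstar + h) xstar.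
    rewrite (addrC xstar h) addrK => H.
    have := ler_wpM2r Ni0 H; lra.
  by rewrite sumr_const card_ord -(mulr_natr (L / 2 * sqnorm h / M%:R)) divfK.
clearbody g.
have g0 : g = 0.
  apply: sqnorm_eq0.
  set c := `|L| + 1.
  have c0 : 0 < c by rewrite /c; have := normr_ge0 L; lra.
  set u := c^-1.
  have u0 : 0 < u by rewrite invr_gt0.
  have uc : u * c = 1 by rewrite mulVf // gt_eqF.
  have Ln : L <= `|L| := ler_norm L.
  have := key (- (u *: g)); have := Hxstar (xstar + - (u *: g)).
  rewrite sqnormN dotNr dotZr opprK /sqnorm dotZl dotZr -/(sqnorm g).
  have q0 := sqnorm_ge0 g.
  move=> H1 H2.
  have H3 : 0 <= - (u * sqnorm g) + L / 2 * (u * (u * sqnorm g)) by lra.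
  have H4 : 0 <= - sqnorm g + L / 2 * (u * sqnorm g).
    have : 0 <= u * (- sqnorm g + L / 2 * (u * sqnorm g)) by lra.
    by rewrite pmulr_rge0.
  have H5 : L * u <= 1.
    have := ler_wpM2r (ltW u0) Ln; move: uc; rewrite /c mulrDr mulr1 => uc.
    rewrite (mulrC u) in uc; lra.
  have H6 : 0 <= (1 - L * u) * sqnorm g by apply: mulr_ge0 => //; lra.
  apply/eqP; rewrite eq_le q0 andbT; lra.
rewrite g0 dot0l subr0.
have sumA : \sum_(m < M) (x t m - xh) = 0.
  rewrite sumrB sumr_const card_ord -scaler_nat /xh scalerA mulfV // scale1r.
  by rewrite subrr.
have J : \sum_(m < M) sqnorm (x t m - xstar)
   = \sum_(m < M) sqnorm (x t m - xh) + M%:R * sqnorm (xh - xstar).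
  transitivity (\sum_(m < M) (sqnorm (x t m - xh) + 2 * dot (x t m - xh) (xh - xstar) + sqnorm (xh - xstar))).
    by apply: eq_bigr => m _; rewrite -sqnormD addrA subrK.
  rewrite !big_split /= -mulr_sumr -dot_suml sumA dot0l mulr0 addr0 sumr_const card_ord.
  by rewrite mulr_natl.
have per_m : forall m, - dot (xh - xstar) (gradf m (x t m)) <= f m xstar - f m xh
    + L / 2 * sqnorm (x t m - xh) - mu / 2 * sqnorm (x t m - xstar).
  move=> m; have h1 := Hsm m xh (x t m); have h2 := Hsc m xstar (x t m).
  rewrite (dotC (xh - xstar)) dotBr; rewrite !dotBr in h1 h2.
  rewrite -(opprB (x t m) xh) sqnormN in h1.
  rewrite -(opprB (x t m) xstar) sqnormN in h2.
  lra.
have S1 : \sum_(m < M) - dot (xh - xstar) (gradf m (x t m)) <= \sum_(m < M) (f m xstar - f m xh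
    + L / 2 * sqnorm (x t m - xh) - mu / 2 * sqnorm (x t m - xstar)).
  by apply: ler_sum => m _; exact: per_m.
rewrite sumrN !big_split !sumrN /= -!mulr_sumr in S1.
have LT : L * \sum_(m < M) sqnorm (x t m - xh)
          <= L / alpha * \sum_(m < M) wnorm2 Dh (x t m - xh).
  by rewrite !mulr_sumr; apply: ler_sum => m _; apply: Lterm.
have MT := muterm (xh - xstar).
have JT : sqnorm (xh - xstar) <= (\sum_(m < M) sqnorm (x t m - xstar)) / M%:R.
  by rewrite ler_pdivlMr // J mulrC lerDr; apply: sumr_ge0 => m _; apply: sqnorm_ge0.
have MJ := ler_wpM2l Hmu JT.
have S1' := ler_wpM2l Ni0 S1.
have LT' := ler_wpM2l Ni0 LT.
rewrite -!mulr_suml.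
lra.
Qed.
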